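(* Let $\mathbf{M}^2$ be a connected smooth oriented surface and $\alpha:\mathbf{M}^2\to\mathbf{R}^4$ a smooth immersion with globally defined orthogonal asymptotic lines. Suppose that $\alpha$ has constant projection with distance of projection $r>0$, i.e. there exists a unit normal vector field $\nu$ along $\alpha$ such that $\langle II(p,v),\nu(p)\rangle = r\, I(p,v)$ for all $p\in\mathbf{M}^2$ and $v\in T_p\mathbf{M}$ (equivalently, for each $p$ the orthogonal projection of the ellipse of curvature $\varepsilon_\alpha(p)$ onto the $\nu(p)$-axis is the single point $r\nu(p)$). Suppose moreover that the Gaussian curvature satisfies $K(p)\neq r^2$ for all $p\in\mathbf{M}^2$. Then $\alpha$ is hyperspherical; more precisely, $\alpha(\mathbf{M}^2)$ is contained in a hypersphere of $\mathbf{R}^4$ of radius $1/r$.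
   Context: For an immersion $\alpha:\mathbf{M}^2\to\mathbf{R}^4$ and a local chart $(u,v)$, $E=\langle\alpha_u,\alpha_u\rangle$, $F=\langle\alpha_u,\alpha_v\rangle$, $G=\langle\alpha_v,\alpha_v\rangle$ and $I=E\,du^2+2F\,du\,dv+G\,dv^2$. For an orthonormal normal frame $\{\nu_1,\nu_2\}$, $e_i=\langle\alpha_{uu},\nu_i\rangle$, $f_i=\langle\alpha_{uv},\nu_i\rangle$, $g_i=\langle\alpha_{vv},\nu_i\rangle$, $II_{\nu_i}=e_i\,du^2+2f_i\,du\,dv+g_i\,dv^2$, and $II=II_{\nu_1}\nu_1+II_{\nu_2}\nu_2$. The Gaussian curvature is $K=\frac{e_1g_1-f_1^2+e_2g_2-f_2^2}{EG-F^2}$. The normal curvature vector is $\eta(p,v)=II(p,v)/I(p,v)$ and the ellipse of curvature $\varepsilon_\alpha(p)$ is the image of the unit tangent circle under $\eta(p,\cdot)$. A point is an inflection point if the ellipse of curvature there is a radial line segment (a segment contained in a line through the origin of $N_p\mathbf{M}$), equivalently $k_N(p)=0$ and $\Delta(p)=0$ where $k_N=\frac{E(f_1g_2-f_2g_1)-F(e_1g_2-e_2g_1)+G(e_1f_2-e_2f_1)}{2(EG-F^2)}$ and $\Delta$ is $\frac{1}{4(EG-F^2)}$ times the resultant determinant of $II_{\nu_1},II_{\nu_2}$. The asymptotic lines are the integral curves of the quadratic differential equation $(e_1f_2-e_2f_1)du^2+(e_1g_2-e_2g_1)du\,dv+(f_1g_2-f_2g_1)dv^2=0$ (equivalently $\mathrm{Jac}(II_{\nu_1},II_{\nu_2})=0$,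 Jacobian with respect to $(du,dv)$); geometrically, they are the directions whose normal curvature vectors are tangent lines from the origin of $N_p\mathbf{M}$ to $\varepsilon_\alpha(p)$; their singularities are the inflection points. ''Globally defined orthogonal asymptotic lines'' means the two asymptotic directions are defined away from inflection points on all of $\mathbf{M}^2$ and are orthogonal. An immersion is hyperspherical if its image is contained in a hypersphere (round $3$-sphere) of $\mathbf{R}^4$. *)

(* Defs.v *)
From Stdlib Require Import Reals.
From Coquelicot Require Import Coquelicot.
Open Scope R_scope.

Definition R2 := (R * R)%type.

Record R4 := mkR4 { c0 : R; c1 : R; c2 : R; c3 : R }.

Definition dot4 (x y : R4) : R :=
  c0 x * c0 y + c1 x * c1 y + c2 x * c2 y + c3 x * c3 y.
Definition sub4 (x y : R4) : R4 :=
  mkR4 (c0 x - c0 y) (c1 x - c1 y) (c2 x - c2 y) (c3 x - c3 y).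
Definition norm4 (x : R4) : R := sqrt (dot4 x x).

Definition pdu (g : R2 -> R) (p : R2) : R := Derive (fun t => g (t, snd p)) (fst p).
Definition pdv (g : R2 -> R) (p : R2) : R := Derive (fun t => g (fst p, t)) (snd p).

Fixpoint Ck (k : nat) (U : R2 -> Prop) (g : R2 -> R) : Prop :=
  match k with
  | O => forall p, U p -> continuous g p
  | S k' =>
      (forall p, U p -> ex_derive (fun t => g (t, snd p)) (fst p)
                     /\ ex_derive (fun t => g (fst p, t)) (snd p))
      /\ Ck k' U (pdu g) /\ Ck k' U (pdv g)
  end.

Definition smooth_on (U : R2 -> Prop) (g : R2 -> R) : Prop := forall k, Ck k U g.

Definition smooth2_on (U : R2 -> Prop) (f : R2 -> R2) : Prop :=
  smooth_on U (fun p => fst (f p)) /\ smooth_on U (fun p => snd (f p)).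

Definition smooth4_on (U : R2 -> Prop) (f : R2 -> R4) : Prop :=
  smooth_on U (fun p => c0 (f p)) /\ smooth_on U (fun p => c1 (f p)) /\
  smooth_on U (fun p => c2 (f p)) /\ smooth_on U (fun p => c3 (f p)).

Definition jac2 (f : R2 -> R2) (p : R2) : R :=
  pdu (fun q => fst (f q)) p * pdv (fun q => snd (f q)) p
  - pdv (fun q => fst (f q)) p * pdu (fun q => snd (f q)) p.

Definition Du (X : R2 -> R4) (p : R2) : R4 :=
  mkR4 (pdu (fun q => c0 (X q)) p) (pdu (fun q => c1 (X q)) p)
       (pdu (fun q => c2 (X q)) p) (pdu (fun q => c3 (X q)) p).
Definition Dv (X : R2 -> R4) (p : R2) : R4 :=
  mkR4 (pdv (fun q => c0 (X q)) p) (pdv (fun q => c1 (X q)) p)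
       (pdv (fun q => c2 (X q)) p) (pdv (fun q => c3 (X q)) p).

(* A surface is a type M with charts phi i : U i -> M (U i open in R^2),
   indexed by nat (countable atlas, i.e. second countable). *)

Definition chart_domain_overlap {M : Type} (U : nat -> R2 -> Prop)
  (phi : nat -> R2 -> M) (i j : nat) (p : R2) : Prop :=
  U i p /\ exists q, U j q /\ phi j q = phi i p.

Definition M_open {M : Type} (U : nat -> R2 -> Prop) (phi : nat -> R2 -> M)
  (S : M -> Prop) : Prop :=
  forall i, open (fun p => U i p /\ S (phi i p)).

Definition smooth_oriented_surface {M : Type} (U : nat -> R2 -> Prop)
  (phi : nat -> R2 -> M) : Prop :=
  (forall i, open (U i)) /\
  (forall i p q, U i p -> U i q -> phi i p = phi i q -> p = q) /\
  (forall x : M, exists i p, U i p /\ phi i p = x) /\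
  (forall i j, open (chart_domain_overlap U phi i j)) /\
  (* smooth, orientation-preserving transition maps *)
  (forall i j, exists tau : R2 -> R2,
      (forall p, chart_domain_overlap U phi i j p ->
                 U j (tau p) /\ phi j (tau p) = phi i p) /\
      smooth2_on (chart_domain_overlap U phi i j) tau /\
      (forall p, chart_domain_overlap U phi i j p -> jac2 tau p > 0)) /\
  (forall x y : M, x <> y -> exists A B : M -> Prop,
      M_open U phi A /\ M_open U phi B /\ A x /\ B y /\
      (forall z, ~ (A z /\ B z))).

Definition M_connected {M : Type} (U : nat -> R2 -> Prop) (phi : nat -> R2 -> M) : Prop :=
  forall S : M -> Prop, M_open U phi S -> M_open U phi (fun x => ~ S x) ->
    (forall x, S x) \/ (forall x, ~ S x).

Definition smooth_immersion {M : Type} (U : nat -> R2 -> Prop) (phi : nat -> R2 -> M)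
  (alpha : M -> R4) : Prop :=
  forall i, smooth4_on (U i) (fun p => alpha (phi i p)) /\
    forall p, U i p ->
      let X := fun q => alpha (phi i q) in
      dot4 (Du X p) (Du X p) * dot4 (Dv X p) (Dv X p) - (dot4 (Du X p) (Dv X p))^2 > 0.

Section Local.
Variable X : R2 -> R4.
Variable p : R2.

Definition fE := dot4 (Du X p) (Du X p).
Definition fF := dot4 (Du X p) (Dv X p).
Definition fG := dot4 (Dv X p) (Dv X p).
Definition Xuu := Du (Du X) p.
Definition Xuv := Dv (Du X) p.
Definition Xvv := Dv (Dv X) p.

Definition Ibil (w1 w2 : R2) : R :=
  fE * fst w1 * fst w2 + fF * (fst w1 * snd w2 + snd w1 * fst w2) + fG * snd w1 * snd w2.

Definition normal_frame (n1 n2 : R4) : Prop :=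
  dot4 n1 n1 = 1 /\ dot4 n2 n2 = 1 /\ dot4 n1 n2 = 0 /\
  dot4 n1 (Du X p) = 0 /\ dot4 n1 (Dv X p) = 0 /\
  dot4 n2 (Du X p) = 0 /\ dot4 n2 (Dv X p) = 0.

Variables n1 n2 : R4.
Definition e1 := dot4 Xuu n1.  Definition f1 := dot4 Xuv n1.  Definition g1 := dot4 Xvv n1.
Definition e2 := dot4 Xuu n2.  Definition f2 := dot4 Xuv n2.  Definition g2 := dot4 Xvv n2.

Definition gauss_K : R :=
  (e1 * g1 - f1 ^ 2 + e2 * g2 - f2 ^ 2) / (fE * fG - fF ^ 2).

Definition normal_curv_kN : R :=
  (fE * (f1 * g2 - f2 * g1) - fF * (e1 * g2 - e2 * g1) + fG * (e1 * f2 - e2 * f1))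
  / (2 * (fE * fG - fF ^ 2)).

End Local.

Definition det3 (a b c d e f g h i : R) : R :=
  a * (e * i - f * h) - b * (d * i - f * g) + c * (d * h - e * g).

Definition det4 (a11 a12 a13 a14 a21 a22 a23 a24 a31 a32 a33 a34 a41 a42 a43 a44 : R) : R :=
  a11 * det3 a22 a23 a24 a32 a33 a34 a42 a43 a44
  - a12 * det3 a21 a23 a24 a31 a33 a34 a41 a43 a44
  + a13 * det3 a21 a22 a24 a31 a32 a34 a41 a42 a44
  - a14 * det3 a21 a22 a23 a31 a32 a33 a41 a42 a43.

Definition Delta (X : R2 -> R4) (p : R2) (n1 n2 : R4) : R :=
  let a1 := e1 X p n1 in let b1 := f1 X p n1 in let d1 := g1 X p n1 in
  let a2 := e2 X p n2 in let b2 := f2 X p n2 in let d2 := g2 X p n2 in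
  / (4 * (fE X p * fG X p - fF X p ^ 2)) *
  det4 a1 (2 * b1) d1 0
       a2 (2 * b2) d2 0
       0 a1 (2 * b1) d1
       0 a2 (2 * b2) d2.

Definition inflection_pt (X : R2 -> R4) (p : R2) (n1 n2 : R4) : Prop :=
  normal_curv_kN X p n1 n2 = 0 /\ Delta X p n1 n2 = 0.

Definition asympt_Q (X : R2 -> R4) (p : R2) (n1 n2 : R4) (w : R2) : R :=
  let a1 := e1 X p n1 in let b1 := f1 X p n1 in let d1 := g1 X p n1 in
  let a2 := e2 X p n2 in let b2 := f2 X p n2 in let d2 := g2 X p n2 in
  (a1 * b2 - a2 * b1) * fst w ^ 2 + (a1 * d2 - a2 * d1) * fst w * snd w
  + (b1 * d2 - b2 * d1) * snd w ^ 2.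

(* globally defined orthogonal asymptotic lines: at every point (in every chart,
   for every orthonormal normal frame) the point is not an inflection point and
   there are exactly two asymptotic directions, which are I-orthogonal. *)
Definition global_orthogonal_asymptotic_lines {M : Type} (U : nat -> R2 -> Prop)
  (phi : nat -> R2 -> M) (alpha : M -> R4) : Prop :=
  forall i p n1 n2, U i p ->
    let X := fun q => alpha (phi i q) in
    normal_frame X p n1 n2 ->
    ~ inflection_pt X p n1 n2 /\
    exists w1 w2 : R2, w1 <> (0, 0) /\ w2 <> (0, 0) /\
      asympt_Q X p n1 n2 w1 = 0 /\ asympt_Q X p n1 n2 w2 = 0 /\
      Ibil X p w1 w2 = 0 /\
      (forall w : R2, asympt_Q X p n1 n2 w = 0 ->
         exists t : R, w = (t * fst w1, t * snd w1) \/ w = (t * fst w2, t * snd w2)).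

Definition constant_projection {M : Type} (U : nat -> R2 -> Prop)
  (phi : nat -> R2 -> M) (alpha : M -> R4) (r : R) : Prop :=
  exists nu : M -> R4,
    forall i, smooth4_on (U i) (fun q => nu (phi i q)) /\
    forall p, U i p ->
      let X := fun q => alpha (phi i q) in
      let n := nu (phi i p) in
      dot4 n n = 1 /\ dot4 n (Du X p) = 0 /\ dot4 n (Dv X p) = 0 /\
      forall du dv : R,
        dot4 (Xuu X p) n * du ^ 2 + 2 * dot4 (Xuv X p) n * du * dv
        + dot4 (Xvv X p) n * dv ^ 2
        = r * (fE X p * du ^ 2 + 2 * fF X p * du * dv + fG X p * dv ^ 2).

Definition gauss_curv_ne {M : Type} (U : nat -> R2 -> Prop)
  (phi : nat -> R2 -> M) (alpha : M -> R4) (k : R) : Prop :=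
  forall i p n1 n2, U i p ->
    let X := fun q => alpha (phi i q) in
    normal_frame X p n1 n2 -> gauss_K X p n1 n2 <> k.

(* Main.v *)
Require Import Defs.
From Stdlib Require Import Reals.
From Coquelicot Require Import Coquelicot.
From Stdlib Require Import Lra Psatz Classical_Prop.
Open Scope R_scope.
Local Notation c0 := Defs.c0.
Local Notation c1 := Defs.c1.
Local Notation c2 := Defs.c2.
Local Notation c3 := Defs.c3.

Definition cross3 (a b n : R4) : R4 :=
  mkR4 (det3 (c1 a) (c2 a) (c3 a) (c1 b) (c2 b) (c3 b) (c1 n) (c2 n) (c3 n))
       (- det3 (c0 a) (c2 a) (c3 a) (c0 b) (c2 b) (c3 b) (c0 n) (c2 n) (c3 n))
       (det3 (c0 a) (c1 a) (c3 a) (c0 b) (c1 b) (c3 b) (c0 n) (c1 n) (c3 n))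
       (- det3 (c0 a) (c1 a) (c2 a) (c0 b) (c1 b) (c2 b) (c0 n) (c1 n) (c2 n)).

Definition det4v (m1 m2 m3 m4 : R4) : R :=
  det4 (c0 m1) (c1 m1) (c2 m1) (c3 m1) (c0 m2) (c1 m2) (c2 m2) (c3 m2)
       (c0 m3) (c1 m3) (c2 m3) (c3 m3) (c0 m4) (c1 m4) (c2 m4) (c3 m4).

Lemma cramer (m1 m2 m3 m4 y : R4) :
  dot4 m1 y = 0 -> dot4 m2 y = 0 -> dot4 m3 y = 0 -> dot4 m4 y = 0 ->
  det4v m1 m2 m3 m4 <> 0 -> y = mkR4 0 0 0 0.
Proof.
  destruct m1 as [a0 a1 a2 a3], m2 as [b0 b1 b2 b3], m3 as [d0 d1 d2 d3],
    m4 as [e0 e1 e2 e3], y as [y0 y1 y2 y3].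
  unfold dot4, det4v; simpl; intros H1 H2 H3 H4 Hd.
  set (D := det4 a0 a1 a2 a3 b0 b1 b2 b3 d0 d1 d2 d3 e0 e1 e2 e3) in *.
  assert (E0 : D * y0 = det4 (a0*y0+a1*y1+a2*y2+a3*y3) a1 a2 a3
                         (b0*y0+b1*y1+b2*y2+b3*y3) b1 b2 b3
                         (d0*y0+d1*y1+d2*y2+d3*y3) d1 d2 d3
                         (e0*y0+e1*y1+e2*y2+e3*y3) e1 e2 e3)
    by (unfold D, det4, det3; ring).
  assert (E1 : D * y1 = det4 a0 (a0*y0+a1*y1+a2*y2+a3*y3) a2 a3
                         b0 (b0*y0+b1*y1+b2*y2+b3*y3) b2 b3
                         d0 (d0*y0+d1*y1+d2*y2+d3*y3) d2 d3
                         e0 (e0*y0+e1*y1+e2*y2+e3*y3) e2 e3)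
    by (unfold D, det4, det3; ring).
  assert (E2 : D * y2 = det4 a0 a1 (a0*y0+a1*y1+a2*y2+a3*y3) a3
                         b0 b1 (b0*y0+b1*y1+b2*y2+b3*y3) b3
                         d0 d1 (d0*y0+d1*y1+d2*y2+d3*y3) d3
                         e0 e1 (e0*y0+e1*y1+e2*y2+e3*y3) e3)
    by (unfold D, det4, det3; ring).
  assert (E3 : D * y3 = det4 a0 a1 a2 (a0*y0+a1*y1+a2*y2+a3*y3)
                         b0 b1 b2 (b0*y0+b1*y1+b2*y2+b3*y3)
                         d0 d1 d2 (d0*y0+d1*y1+d2*y2+d3*y3)
                         e0 e1 e2 (e0*y0+e1*y1+e2*y2+e3*y3))
    by (unfold D, det4, det3; ring).
  rewrite H1, H2, H3, H4 in E0, E1, E2, E3.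
  unfold det4, det3 in E0, E1, E2, E3.
  f_equal.
  - apply (Rmult_eq_reg_l D); [|lra]. rewrite Rmult_0_r, E0; ring.
  - apply (Rmult_eq_reg_l D); [|lra]. rewrite Rmult_0_r, E1; ring.
  - apply (Rmult_eq_reg_l D); [|lra]. rewrite Rmult_0_r, E2; ring.
  - apply (Rmult_eq_reg_l D); [|lra]. rewrite Rmult_0_r, E3; ring.
Qed.

Lemma cross_a a b n : dot4 (cross3 a b n) a = 0.
Proof. destruct a, b, n; unfold cross3, dot4, det3; simpl; ring. Qed.
Lemma cross_b a b n : dot4 (cross3 a b n) b = 0.
Proof. destruct a, b, n; unfold cross3, dot4, det3; simpl; ring. Qed.
Lemma cross_n a b n : dot4 (cross3 a b n) n = 0.
Proof. destruct a, b, n; unfold cross3, dot4, det3; simpl; ring. Qed.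
Lemma cross_det a b n : det4v (cross3 a b n) a b n = dot4 (cross3 a b n) (cross3 a b n).
Proof. destruct a, b, n; unfold cross3, det4v, dot4, det4, det3; simpl; ring. Qed.
Lemma cross_gram a b n : dot4 (cross3 a b n) (cross3 a b n) =
  det3 (dot4 a a) (dot4 a b) (dot4 a n) (dot4 b a) (dot4 b b) (dot4 b n)
       (dot4 n a) (dot4 n b) (dot4 n n).
Proof. destruct a, b, n; unfold cross3, dot4, det3; simpl; ring. Qed.

Definition zero4 := mkR4 0 0 0 0.
Definition comb4 (s : R) (x : R4) (t : R) (y : R4) : R4 :=
  mkR4 (s * c0 x + t * c0 y) (s * c1 x + t * c1 y) (s * c2 x + t * c2 y) (s * c3 x + t * c3 y).
Definition lin4 (x y : R4) (k : R) : R4 := comb4 1 x k y.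

Lemma dot_comb_l s x t y z : dot4 (comb4 s x t y) z = s * dot4 x z + t * dot4 y z.
Proof. destruct x, y, z; unfold comb4, dot4; simpl; ring. Qed.
Lemma dot_comb_r s x t y z : dot4 z (comb4 s x t y) = s * dot4 z x + t * dot4 z y.
Proof. destruct x, y, z; unfold comb4, dot4; simpl; ring. Qed.
Lemma dot_sym x y : dot4 x y = dot4 y x.
Proof. destruct x, y; unfold dot4; simpl; ring. Qed.
Lemma dot_zero_r x : dot4 x zero4 = 0.
Proof. destruct x; unfold dot4, zero4; simpl; ring. Qed.

Lemma alg_core (a b n xuu xuv xvv nu nv : R4) (r : R) :
 dot4 a a * dot4 b b - dot4 a b ^ 2 > 0 -> dot4 n n = 1 -> dot4 n a = 0 -> dot4 n b = 0 ->
 dot4 xuu n = r * dot4 a a -> dot4 xuv n = r * dot4 a b -> dot4 xvv n = r * dot4 b b ->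
 dot4 nu a + dot4 n xuu = 0 -> dot4 nu b + dot4 n xuv = 0 ->
 dot4 nv a + dot4 n xuv = 0 -> dot4 nv b + dot4 n xvv = 0 ->
 dot4 nu n + dot4 n nu = 0 -> dot4 nv n + dot4 n nv = 0 ->
 dot4 xuu nv - dot4 xuv nu = r * (dot4 a xuv - dot4 xuu b) ->
 dot4 xuv nv - dot4 xvv nu = r * (dot4 a xvv - dot4 b xuv) ->
 (forall n2, dot4 n2 n2 = 1 -> dot4 n n2 = 0 -> dot4 n2 a = 0 -> dot4 n2 b = 0 ->
    dot4 xuu n2 * dot4 xvv n2 - dot4 xuv n2 ^ 2 <> 0) ->
 lin4 nu a r = zero4 /\ lin4 nv b r = zero4.
Proof.
  intros HD Hnn Hna Hnb Huu Huv Hvv D1 D2 D3 D4 D5 D6 C1 C2 HK.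
  set (C := cross3 a b n).
  assert (HCC : dot4 C C = dot4 a a * dot4 b b - dot4 a b ^ 2).
  { unfold C; rewrite cross_gram, (dot_sym b a), (dot_sym a n), (dot_sym b n), Hna, Hnb, Hnn.
    unfold det3; ring. }
  assert (HCa : dot4 C a = 0) by apply cross_a.
  assert (HCb : dot4 C b = 0) by apply cross_b.
  assert (HCn : dot4 C n = 0) by apply cross_n.
  set (K := dot4 C C) in *.
  set (A := lin4 nu a r). set (B := lin4 nv b r).
  assert (Aa : dot4 A a = 0).
  { unfold A, lin4; rewrite dot_comb_l. rewrite (dot_sym n xuu) in D1. lra. }
  assert (Ab : dot4 A b = 0).
  { unfold A, lin4; rewrite dot_comb_l. rewrite (dot_sym n xuv) in D2. lra. }
  assert (An : dot4 A n = 0).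
  { unfold A, lin4; rewrite dot_comb_l. rewrite (dot_sym n nu) in D5. rewrite (dot_sym a n), Hna. lra. }
  assert (Ba : dot4 B a = 0).
  { unfold B, lin4; rewrite dot_comb_l. rewrite (dot_sym n xuv) in D3. rewrite (dot_sym b a). lra. }
  assert (Bb : dot4 B b = 0).
  { unfold B, lin4; rewrite dot_comb_l. rewrite (dot_sym n xvv) in D4. lra. }
  assert (Bn : dot4 B n = 0).
  { unfold B, lin4; rewrite dot_comb_l. rewrite (dot_sym n nv) in D6. rewrite (dot_sym b n), Hnb. lra. }
  assert (Cod1 : dot4 xuu B = dot4 xuv A).
  { unfold A, B, lin4; rewrite !dot_comb_r. rewrite (dot_sym a xuv), (dot_sym xuv a) in *. lra. }
  assert (Cod2 : dot4 xuv B = dot4 xvv A).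
  { unfold A, B, lin4; rewrite !dot_comb_r. rewrite (dot_sym a xvv), (dot_sym b xuv) in *. lra. }
  assert (Kpos : K > 0) by lra.
  assert (HdetC : det4v C a b n <> 0) by (unfold C; rewrite cross_det; fold C; fold K; lra).
  set (la := dot4 A C). set (mu := dot4 B C).
  assert (YA : comb4 K A (- la) C = zero4).
  { apply cramer with C a b n; auto;
    rewrite dot_sym, dot_comb_l; unfold la, K.
    - ring.
    - rewrite Aa, HCa; ring.
    - rewrite Ab, HCb; ring.
    - rewrite An, HCn; ring. }
  assert (YB : comb4 K B (- mu) C = zero4).
  { apply cramer with C a b n; auto;
    rewrite dot_sym, dot_comb_l; unfold mu, K.
    - ring.
    - rewrite Ba, HCa; ring.
    - rewrite Bb, HCb; ring.
    - rewrite Bn, HCn; ring. }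
  assert (E1 : dot4 xuu (comb4 K B (- mu) C) = 0) by (rewrite YB; apply dot_zero_r).
  assert (E2 : dot4 xuv (comb4 K A (- la) C) = 0) by (rewrite YA; apply dot_zero_r).
  assert (E3 : dot4 xuv (comb4 K B (- mu) C) = 0) by (rewrite YB; apply dot_zero_r).
  assert (E4 : dot4 xvv (comb4 K A (- la) C) = 0) by (rewrite YA; apply dot_zero_r).
  rewrite dot_comb_r in E1, E2, E3, E4.
  set (e := dot4 xuu C) in *. set (f := dot4 xuv C) in *. set (g := dot4 xvv C) in *.
  assert (Q1 : mu * e = la * f) by (rewrite Cod1 in E1; lra).
  assert (Q2 : mu * f = la * g) by (rewrite Cod2 in E3; lra).
  assert (Hnz : e * g - f ^ 2 <> 0).
  { set (s := sqrt K).
    assert (Hs : 0 < s) by (apply sqrt_lt_R0; lra).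
    assert (Hs2 : s * s = K) by (apply sqrt_sqrt; lra).
    specialize (HK (comb4 (/ s) C 0 C)).
    rewrite ?dot_comb_r, ?dot_comb_l, ?dot_comb_r in HK.
    fold e f g in HK. rewrite (dot_sym n C) in HK.
    rewrite HCn, HCa, HCb in HK. fold K in HK.
    intro Hz. apply HK.
    - rewrite <- Hs2; field; lra.
    - ring.
    - ring.
    - ring.
    - replace (/ s * e + 0 * e) with (e / s) by (field; lra).
      replace (/ s * g + 0 * g) with (g / s) by (field; lra).
      replace (/ s * f + 0 * f) with (f / s) by (field; lra).
      replace (e / s * (g / s) - (f / s) ^ 2) with ((e * g - f ^ 2) / (s * s)) by (field; lra).
      rewrite Hz; field; lra. }
  assert (Hmu : mu = 0).
  { apply (Rmult_eq_reg_l (e * g - f ^ 2)); [|exact Hnz].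
    replace ((e * g - f ^ 2) * mu) with (g * (mu * e) - f * (mu * f)) by ring.
    rewrite Q1, Q2; ring. }
  assert (Hla : la = 0).
  { rewrite Hmu in Q1, Q2.
    apply (Rmult_eq_reg_l (e * g - f ^ 2)); [|exact Hnz].
    replace ((e * g - f ^ 2) * la) with (e * (la * g) - f * (la * f)) by ring.
    rewrite <- Q1, <- Q2; ring. }
  rewrite Hla in YA. rewrite Hmu in YB.
  split.
  - fold A. destruct A as [x0 x1 x2 x3]. unfold comb4, zero4 in YA; simpl in YA.
    injection YA; intros; unfold zero4; f_equal;
      apply (Rmult_eq_reg_l K); lra.
  - fold B. destruct B as [x0 x1 x2 x3]. unfold comb4, zero4 in YB; simpl in YB.
    injection YB; intros; unfold zero4; f_equal;
      apply (Rmult_eq_reg_l K); lra.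
Qed.

Lemma sm_du U g : smooth_on U g -> smooth_on U (pdu g).
Proof. intros H k. exact (proj1 (proj2 (H (S k)))). Qed.
Lemma sm_dv U g : smooth_on U g -> smooth_on U (pdv g).
Proof. intros H k. exact (proj2 (proj2 (H (S k)))). Qed.
Lemma sm_exu U g p : smooth_on U g -> U p -> ex_derive (fun t => g (t, snd p)) (fst p).
Proof. intros H Hp. exact (proj1 (proj1 (H 1%nat) p Hp)). Qed.
Lemma sm_exv U g p : smooth_on U g -> U p -> ex_derive (fun t => g (fst p, t)) (snd p).
Proof. intros H Hp. exact (proj2 (proj1 (H 1%nat) p Hp)). Qed.
Lemma sm_cont U g p : smooth_on U g -> U p -> continuous g p.
Proof. intros H Hp. exact (H 0%nat p Hp). Qed.

Lemma sm4_Du U P : smooth4_on U P -> smooth4_on U (Du P).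
Proof. intros [H0 [H1 [H2 H3]]]; repeat split; apply sm_du; assumption. Qed.
Lemma sm4_Dv U P : smooth4_on U P -> smooth4_on U (Dv P).
Proof. intros [H0 [H1 [H2 H3]]]; repeat split; apply sm_dv; assumption. Qed.

Lemma open_sq (U : R2 -> Prop) p : open U -> U p ->
  exists eps : posreal, forall q, Rabs (fst q - fst p) < eps -> Rabs (snd q - snd p) < eps -> U q.
Proof.
  intros HU Hp. destruct (HU p Hp) as [eps H]. exists eps. intros q h1 h2. apply H. split; assumption.
Qed.

Lemma schwarz U g p : open U -> smooth_on U g -> U p -> pdv (pdu g) p = pdu (pdv g) p.
Proof.
  intros HU Hg Hp. destruct p as [x y].
  destruct (open_sq U (x, y) HU Hp) as [eps Heps].
  symmetry.
  apply (Schwarz (fun u v => g (u, v)) x y).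
  - exists eps; intros u v hu hv.
    assert (Huv : U (u, v)) by (apply Heps; simpl; assumption).
    split; [|split; [|split]].
    + exact (sm_exu U g (u, v) Hg Huv).
    + exact (sm_exv U g (u, v) Hg Huv).
    + exact (sm_exu U (pdv g) (u, v) (sm_dv U g Hg) Huv).
    + exact (sm_exv U (pdu g) (u, v) (sm_du U g Hg) Huv).
  - apply continuity_2d_pt_filterlim.
    apply filterlim_ext with (pdu (pdv g)); [intros [u v]; reflexivity|].
    exact (sm_cont U _ (x, y) (sm_du U _ (sm_dv U g Hg)) Hp).
  - apply continuity_2d_pt_filterlim.
    apply filterlim_ext with (pdv (pdu g)); [intros [u v]; reflexivity|].
    exact (sm_cont U _ (x, y) (sm_dv U _ (sm_du U g Hg)) Hp).
Qed.

Lemma isd_eq (f : R -> R) (x a b : R) : is_derive f x a -> a = b -> is_derive f x b.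
Proof. intros H E; subst; exact H. Qed.
Lemma isd_mult (f g : R -> R) (x a b : R) : is_derive f x a -> is_derive g x b ->
  is_derive (fun t => f t * g t) x (a * g x + f x * b).
Proof. intros Ha Hb. apply (is_derive_mult f g x a b Ha Hb). intros; apply Rmult_comm. Qed.
Lemma isd_plus (f g : R -> R) (x a b : R) : is_derive f x a -> is_derive g x b ->
  is_derive (fun t => f t + g t) x (a + b).
Proof. intros Ha Hb. exact (is_derive_plus f g x a b Ha Hb). Qed.
Lemma isd_const (k x : R) : is_derive (fun _ => k) x 0.
Proof. exact (is_derive_const k x). Qed.
Lemma isd_scal (f : R -> R) (k x a : R) : is_derive f x a -> is_derive (fun t => k * f t) x (k * a).
Proof. intros H. apply isd_eq with (0 * f x + k * a); [|ring]. exact (isd_mult (fun _ => k) f x 0 a (isd_const k x) H). Qed.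

Lemma isd_dot (P Q : R -> R4) (x : R) (dP dQ : R4) :
  is_derive (fun t => c0 (P t)) x (c0 dP) -> is_derive (fun t => c1 (P t)) x (c1 dP) ->
  is_derive (fun t => c2 (P t)) x (c2 dP) -> is_derive (fun t => c3 (P t)) x (c3 dP) ->
  is_derive (fun t => c0 (Q t)) x (c0 dQ) -> is_derive (fun t => c1 (Q t)) x (c1 dQ) ->
  is_derive (fun t => c2 (Q t)) x (c2 dQ) -> is_derive (fun t => c3 (Q t)) x (c3 dQ) ->
  is_derive (fun t => dot4 (P t) (Q t)) x (dot4 dP (Q x) + dot4 (P x) dQ).
Proof.
  intros. unfold dot4.
  apply isd_eq with
    ((c0 dP * c0 (Q x) + c0 (P x) * c0 dQ) + (c1 dP * c1 (Q x) + c1 (P x) * c1 dQ)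
     + (c2 dP * c2 (Q x) + c2 (P x) * c2 dQ) + (c3 dP * c3 (Q x) + c3 (P x) * c3 dQ)).
  - apply isd_plus; [apply isd_plus; [apply isd_plus|]|]; apply isd_mult; assumption.
  - ring.
Qed.

Lemma isd_pdu U g p : smooth_on U g -> U p ->
  is_derive (fun t => g (t, snd p)) (fst p) (pdu g p).
Proof. intros Hg Hp. unfold pdu. exact (Derive_correct _ _ (sm_exu U g p Hg Hp)). Qed.
Lemma isd_pdv U g p : smooth_on U g -> U p ->
  is_derive (fun t => g (fst p, t)) (snd p) (pdv g p).
Proof. intros Hg Hp. unfold pdv. exact (Derive_correct _ _ (sm_exv U g p Hg Hp)). Qed.

Lemma dot_du U P Q p : smooth4_on U P -> smooth4_on U Q -> U p ->
  is_derive (fun t => dot4 (P (t, snd p)) (Q (t, snd p))) (fst p)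
    (dot4 (Du P p) (Q p) + dot4 (P p) (Du Q p)).
Proof.
  intros [P0 [P1 [P2 P3]]] [Q0 [Q1 [Q2 Q3]]] Hp.
  destruct p as [x y]. cbn [fst snd].
  apply (isd_dot (fun t => P (t, y)) (fun t => Q (t, y)) x (Du P (x, y)) (Du Q (x, y))).
  - exact (isd_pdu U _ (x, y) P0 Hp).
  - exact (isd_pdu U _ (x, y) P1 Hp).
  - exact (isd_pdu U _ (x, y) P2 Hp).
  - exact (isd_pdu U _ (x, y) P3 Hp).
  - exact (isd_pdu U _ (x, y) Q0 Hp).
  - exact (isd_pdu U _ (x, y) Q1 Hp).
  - exact (isd_pdu U _ (x, y) Q2 Hp).
  - exact (isd_pdu U _ (x, y) Q3 Hp).
Qed.

Lemma dot_dv U P Q p : smooth4_on U P -> smooth4_on U Q -> U p ->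
  is_derive (fun t => dot4 (P (fst p, t)) (Q (fst p, t))) (snd p)
    (dot4 (Dv P p) (Q p) + dot4 (P p) (Dv Q p)).
Proof.
  intros [P0 [P1 [P2 P3]]] [Q0 [Q1 [Q2 Q3]]] Hp.
  destruct p as [x y]. cbn [fst snd].
  apply (isd_dot (fun t => P (x, t)) (fun t => Q (x, t)) y (Dv P (x, y)) (Dv Q (x, y))).
  - exact (isd_pdv U _ (x, y) P0 Hp).
  - exact (isd_pdv U _ (x, y) P1 Hp).
  - exact (isd_pdv U _ (x, y) P2 Hp).
  - exact (isd_pdv U _ (x, y) P3 Hp).
  - exact (isd_pdv U _ (x, y) Q0 Hp).
  - exact (isd_pdv U _ (x, y) Q1 Hp).
  - exact (isd_pdv U _ (x, y) Q2 Hp).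
  - exact (isd_pdv U _ (x, y) Q3 Hp).
Qed.

Lemma loc_u (U : R2 -> Prop) (f g : R2 -> R) p (a b : R) : open U -> U p ->
  (forall q, U q -> f q = g q) ->
  is_derive (fun t => f (t, snd p)) (fst p) a ->
  is_derive (fun t => g (t, snd p)) (fst p) b -> a = b.
Proof.
  intros HU Hp E Ha Hb.
  destruct (open_sq U p HU Hp) as [eps Heps].
  assert (Ha' : is_derive (fun t => g (t, snd p)) (fst p) a).
  { apply (is_derive_ext_loc (fun t => f (t, snd p))); [|exact Ha].
    exists eps. intros t Ht. apply E, Heps; simpl.
    - exact Ht.
    - rewrite Rminus_eq_0, Rabs_R0. apply cond_pos. }
  apply is_derive_unique in Ha'. apply is_derive_unique in Hb. congruence.
Qed.

Lemma loc_v (U : R2 -> Prop) (f g : R2 -> R) p (a b : R) : open U -> U p ->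
  (forall q, U q -> f q = g q) ->
  is_derive (fun t => f (fst p, t)) (snd p) a ->
  is_derive (fun t => g (fst p, t)) (snd p) b -> a = b.
Proof.
  intros HU Hp E Ha Hb.
  destruct (open_sq U p HU Hp) as [eps Heps].
  assert (Ha' : is_derive (fun t => g (fst p, t)) (snd p) a).
  { apply (is_derive_ext_loc (fun t => f (fst p, t))); [|exact Ha].
    exists eps. intros t Ht. apply E, Heps; simpl.
    - rewrite Rminus_eq_0, Rabs_R0. apply cond_pos.
    - exact Ht. }
  apply is_derive_unique in Ha'. apply is_derive_unique in Hb. congruence.
Qed.

Lemma R4eq (x y : R4) : c0 x = c0 y -> c1 x = c1 y -> c2 x = c2 y -> c3 x = c3 y -> x = y.
Proof. destruct x, y; simpl; intros; subst; reflexivity. Qed.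

Lemma schwarz3 U g p : open U -> smooth_on U g -> U p ->
  pdv (pdv (pdu g)) p = pdu (pdv (pdv g)) p.
Proof.
  intros HU Hg Hp.
  rewrite <- (schwarz U (pdv g) p HU (sm_dv U g Hg) Hp).
  unfold pdv at 1 3.
  apply Derive_ext_loc.
  destruct (open_sq U p HU Hp) as [eps Heps].
  exists eps. intros t Ht. apply (schwarz U); [exact HU | exact Hg |].
  apply Heps; simpl.
  - rewrite Rminus_eq_0, Rabs_R0. apply cond_pos.
  - exact Ht.
Qed.

Lemma chart_key U X N r p : open U -> U p -> smooth4_on U X -> smooth4_on U N ->
 (forall q, U q -> dot4 (N q) (N q) = 1 /\ dot4 (N q) (Du X q) = 0 /\ dot4 (N q) (Dv X q) = 0 /\
   dot4 (Du (Du X) q) (N q) = r * dot4 (Du X q) (Du X q) /\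
   dot4 (Dv (Du X) q) (N q) = r * dot4 (Du X q) (Dv X q) /\
   dot4 (Dv (Dv X) q) (N q) = r * dot4 (Dv X q) (Dv X q)) ->
 dot4 (Du X p) (Du X p) * dot4 (Dv X p) (Dv X p) - dot4 (Du X p) (Dv X p) ^ 2 > 0 ->
 (forall n2, dot4 n2 n2 = 1 -> dot4 (N p) n2 = 0 -> dot4 n2 (Du X p) = 0 -> dot4 n2 (Dv X p) = 0 ->
    dot4 (Du (Du X) p) n2 * dot4 (Dv (Dv X) p) n2 - dot4 (Dv (Du X) p) n2 ^ 2 <> 0) ->
 lin4 (Du N p) (Du X p) r = zero4 /\ lin4 (Dv N p) (Dv X p) r = zero4.
Proof.
  intros HU Hp SX SN H HD HK.
  pose proof (sm4_Du _ _ SX) as SXu. pose proof (sm4_Dv _ _ SX) as SXv.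
  pose proof (sm4_Du _ _ SXu) as SXuu. pose proof (sm4_Dv _ _ SXu) as SXuv.
  pose proof (sm4_Dv _ _ SXv) as SXvv.
  destruct (H p Hp) as [Hnn [Hna [Hnb [Huu [Huv Hvv]]]]].
  assert (s1 : Du (Dv X) p = Dv (Du X) p).
  { destruct SX as [X0 [X1 [X2 X3]]]. apply R4eq; symmetry.
    - exact (schwarz U _ p HU X0 Hp).
    - exact (schwarz U _ p HU X1 Hp).
    - exact (schwarz U _ p HU X2 Hp).
    - exact (schwarz U _ p HU X3 Hp). }
  assert (s2 : Dv (Du (Du X)) p = Du (Dv (Du X)) p).
  { destruct SXu as [X0 [X1 [X2 X3]]]. apply R4eq.
    - exact (schwarz U _ p HU X0 Hp).
    - exact (schwarz U _ p HU X1 Hp).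
    - exact (schwarz U _ p HU X2 Hp).
    - exact (schwarz U _ p HU X3 Hp). }
  assert (s3 : Dv (Dv (Du X)) p = Du (Dv (Dv X)) p).
  { destruct SX as [X0 [X1 [X2 X3]]]. apply R4eq.
    - exact (schwarz3 U _ p HU X0 Hp).
    - exact (schwarz3 U _ p HU X1 Hp).
    - exact (schwarz3 U _ p HU X2 Hp).
    - exact (schwarz3 U _ p HU X3 Hp). }
  assert (D1 : dot4 (Du N p) (Du X p) + dot4 (N p) (Du (Du X) p) = 0).
  { apply (loc_u U (fun q => dot4 (N q) (Du X q)) (fun _ => 0) p _ _ HU Hp).
    - intros q Hq; apply (H q Hq).
    - exact (dot_du U N (Du X) p SN SXu Hp).
    - exact (isd_const 0 (fst p)). }
  assert (D2 : dot4 (Du N p) (Dv X p) + dot4 (N p) (Du (Dv X) p) = 0).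
  { apply (loc_u U (fun q => dot4 (N q) (Dv X q)) (fun _ => 0) p _ _ HU Hp).
    - intros q Hq; apply (H q Hq).
    - exact (dot_du U N (Dv X) p SN SXv Hp).
    - exact (isd_const 0 (fst p)). }
  assert (D3 : dot4 (Dv N p) (Du X p) + dot4 (N p) (Dv (Du X) p) = 0).
  { apply (loc_v U (fun q => dot4 (N q) (Du X q)) (fun _ => 0) p _ _ HU Hp).
    - intros q Hq; apply (H q Hq).
    - exact (dot_dv U N (Du X) p SN SXu Hp).
    - exact (isd_const 0 (snd p)). }
  assert (D4 : dot4 (Dv N p) (Dv X p) + dot4 (N p) (Dv (Dv X) p) = 0).
  { apply (loc_v U (fun q => dot4 (N q) (Dv X q)) (fun _ => 0) p _ _ HU Hp).
    - intros q Hq; apply (H q Hq).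
    - exact (dot_dv U N (Dv X) p SN SXv Hp).
    - exact (isd_const 0 (snd p)). }
  assert (D5 : dot4 (Du N p) (N p) + dot4 (N p) (Du N p) = 0).
  { apply (loc_u U (fun q => dot4 (N q) (N q)) (fun _ => 1) p _ _ HU Hp).
    - intros q Hq; apply (H q Hq).
    - exact (dot_du U N N p SN SN Hp).
    - exact (isd_const 1 (fst p)). }
  assert (D6 : dot4 (Dv N p) (N p) + dot4 (N p) (Dv N p) = 0).
  { apply (loc_v U (fun q => dot4 (N q) (N q)) (fun _ => 1) p _ _ HU Hp).
    - intros q Hq; apply (H q Hq).
    - exact (dot_dv U N N p SN SN Hp).
    - exact (isd_const 1 (snd p)). }
  assert (K1 : dot4 (Dv (Du (Du X)) p) (N p) + dot4 (Du (Du X) p) (Dv N p)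
     = r * (dot4 (Dv (Du X) p) (Du X p) + dot4 (Du X p) (Dv (Du X) p))).
  { apply (loc_v U (fun q => dot4 (Du (Du X) q) (N q)) (fun q => r * dot4 (Du X q) (Du X q)) p _ _ HU Hp).
    - intros q Hq; apply (H q Hq).
    - exact (dot_dv U (Du (Du X)) N p SXuu SN Hp).
    - exact (isd_scal _ r _ _ (dot_dv U (Du X) (Du X) p SXu SXu Hp)). }
  assert (K2 : dot4 (Du (Dv (Du X)) p) (N p) + dot4 (Dv (Du X) p) (Du N p)
     = r * (dot4 (Du (Du X) p) (Dv X p) + dot4 (Du X p) (Du (Dv X) p))).
  { apply (loc_u U (fun q => dot4 (Dv (Du X) q) (N q)) (fun q => r * dot4 (Du X q) (Dv X q)) p _ _ HU Hp).
    - intros q Hq; apply (H q Hq).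
    - exact (dot_du U (Dv (Du X)) N p SXuv SN Hp).
    - exact (isd_scal _ r _ _ (dot_du U (Du X) (Dv X) p SXu SXv Hp)). }
  assert (K3 : dot4 (Dv (Dv (Du X)) p) (N p) + dot4 (Dv (Du X) p) (Dv N p)
     = r * (dot4 (Dv (Du X) p) (Dv X p) + dot4 (Du X p) (Dv (Dv X) p))).
  { apply (loc_v U (fun q => dot4 (Dv (Du X) q) (N q)) (fun q => r * dot4 (Du X q) (Dv X q)) p _ _ HU Hp).
    - intros q Hq; apply (H q Hq).
    - exact (dot_dv U (Dv (Du X)) N p SXuv SN Hp).
    - exact (isd_scal _ r _ _ (dot_dv U (Du X) (Dv X) p SXu SXv Hp)). }
  assert (K4 : dot4 (Du (Dv (Dv X)) p) (N p) + dot4 (Dv (Dv X) p) (Du N p)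
     = r * (dot4 (Du (Dv X) p) (Dv X p) + dot4 (Dv X p) (Du (Dv X) p))).
  { apply (loc_u U (fun q => dot4 (Dv (Dv X) q) (N q)) (fun q => r * dot4 (Dv X q) (Dv X q)) p _ _ HU Hp).
    - intros q Hq; apply (H q Hq).
    - exact (dot_du U (Dv (Dv X)) N p SXvv SN Hp).
    - exact (isd_scal _ r _ _ (dot_du U (Dv X) (Dv X) p SXv SXv Hp)). }
  rewrite s1 in D2, K2, K4. rewrite s2 in K1. rewrite s3 in K3.
  set (a := Du X p) in *. set (b := Dv X p) in *. set (n := N p) in *.
  set (xuu := Du (Du X) p) in *. set (xuv := Dv (Du X) p) in *. set (xvv := Dv (Dv X) p) in *.
  set (nu := Du N p) in *. set (nv := Dv N p) in *.
  apply (alg_core a b n xuu xuv xvv nu nv r); auto.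
  - rewrite (dot_sym xuv a) in K1. lra.
  - rewrite (dot_sym b xuv) in K4 |- *. lra.
Qed.

Definition cmp (j : nat) (x : R4) : R :=
  match j with O => c0 x | 1%nat => c1 x | 2%nat => c2 x | _ => c3 x end.

Lemma cmp_Du j P q : cmp j (Du P q) = pdu (fun q => cmp j (P q)) q.
Proof. destruct j as [|[|[|j]]]; reflexivity. Qed.
Lemma cmp_Dv j P q : cmp j (Dv P q) = pdv (fun q => cmp j (P q)) q.
Proof. destruct j as [|[|[|j]]]; reflexivity. Qed.
Lemma sm_cmp U P j : smooth4_on U P -> smooth_on U (fun q => cmp j (P q)).
Proof. intros [H0 [H1 [H2 H3]]]; destruct j as [|[|[|j]]]; assumption. Qed.
Lemma cmp_comb j s x t y : cmp j (comb4 s x t y) = s * cmp j x + t * cmp j y.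
Proof. destruct j as [|[|[|j]]]; reflexivity. Qed.
Lemma cmp_zero j : cmp j zero4 = 0.
Proof. destruct j as [|[|[|j]]]; reflexivity. Qed.
Lemma R4eq_cmp x y : (forall j, cmp j x = cmp j y) -> x = y.
Proof. intros H. apply R4eq; [apply (H 0%nat) | apply (H 1%nat) | apply (H 2%nat) | apply (H 3%nat)]. Qed.

Lemma chart_all U X N r : open U -> smooth4_on U X -> smooth4_on U N -> 0 < r ->
 (forall q, U q -> dot4 (N q) (N q) = 1 /\ dot4 (N q) (Du X q) = 0 /\ dot4 (N q) (Dv X q) = 0 /\
    forall du dv : R,
        dot4 (Xuu X q) (N q) * du ^ 2 + 2 * dot4 (Xuv X q) (N q) * du * dv
        + dot4 (Xvv X q) (N q) * dv ^ 2
        = r * (fE X q * du ^ 2 + 2 * fF X q * du * dv + fG X q * dv ^ 2)) ->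
 (forall q, U q -> fE X q * fG X q - fF X q ^ 2 > 0) ->
 (forall q n1 n2, U q -> normal_frame X q n1 n2 -> gauss_K X q n1 n2 <> r ^ 2) ->
 forall j q, U q ->
   is_derive (fun t => cmp j (comb4 1 (X (t, snd q)) (/ r) (N (t, snd q)))) (fst q) 0 /\
   is_derive (fun t => cmp j (comb4 1 (X (fst q, t)) (/ r) (N (fst q, t)))) (snd q) 0.
Proof.
  intros HU SX SN Hr Hcp HD Hg j q Hq.
  assert (H : forall q, U q -> dot4 (N q) (N q) = 1 /\ dot4 (N q) (Du X q) = 0 /\ dot4 (N q) (Dv X q) = 0 /\
   dot4 (Du (Du X) q) (N q) = r * dot4 (Du X q) (Du X q) /\
   dot4 (Dv (Du X) q) (N q) = r * dot4 (Du X q) (Dv X q) /\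
   dot4 (Dv (Dv X) q) (N q) = r * dot4 (Dv X q) (Dv X q)).
  { intros q0 Hq0. destruct (Hcp q0 Hq0) as [h1 [h2 [h3 h4]]].
    pose proof (h4 1 0) as k1. pose proof (h4 0 1) as k2. pose proof (h4 1 1) as k3.
    unfold Xuu, Xuv, Xvv, fE, fF, fG in k1, k2, k3.
    repeat split; auto; lra. }
  assert (HK : lin4 (Du N q) (Du X q) r = zero4 /\ lin4 (Dv N q) (Dv X q) r = zero4).
  { apply chart_key with U; auto.
    - apply (HD q Hq).
    - intros n2 h1 h2 h3 h4 Hz.
      destruct (H q Hq) as [k1 [k2 [k3 [k4 [k5 k6]]]]].
      apply (Hg q (N q) n2 Hq).
      + unfold normal_frame; repeat split; auto.
      + unfold gauss_K, e1, f1, g1, e2, f2, g2, Xuu, Xuv, Xvv, fE, fF, fG.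
        rewrite k4, k5, k6.
        pose proof (HD q Hq) as hd. unfold fE, fF, fG in hd.
        set (E := dot4 (Du X q) (Du X q)) in *.
        set (F := dot4 (Du X q) (Dv X q)) in *.
        set (G := dot4 (Dv X q) (Dv X q)) in *.
        replace (r * E * (r * G) - (r * F) ^ 2 + dot4 (Du (Du X) q) n2 * dot4 (Dv (Dv X) q) n2
                 - dot4 (Dv (Du X) q) n2 ^ 2)
          with (r ^ 2 * (E * G - F ^ 2) + (dot4 (Du (Du X) q) n2 * dot4 (Dv (Dv X) q) n2
                 - dot4 (Dv (Du X) q) n2 ^ 2)) by ring.
        rewrite Hz. field. lra. }
  destruct HK as [HKu HKv].
  assert (Eu : 1 * cmp j (Du N q) + r * cmp j (Du X q) = 0).
  { rewrite <- cmp_comb. unfold lin4 in HKu. rewrite HKu. apply cmp_zero. }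
  assert (Ev : 1 * cmp j (Dv N q) + r * cmp j (Dv X q) = 0).
  { rewrite <- cmp_comb. unfold lin4 in HKv. rewrite HKv. apply cmp_zero. }
  rewrite cmp_Du, cmp_Du in Eu. rewrite cmp_Dv, cmp_Dv in Ev.
  split.
  - apply is_derive_ext with (fun t => 1 * cmp j (X (t, snd q)) + / r * cmp j (N (t, snd q))).
    { intros t; symmetry; apply cmp_comb. }
    apply isd_eq with (1 * pdu (fun q => cmp j (X q)) q + / r * pdu (fun q => cmp j (N q)) q).
    + apply isd_plus; apply isd_scal.
      * exact (isd_pdu U _ q (sm_cmp U X j SX) Hq).
      * exact (isd_pdu U _ q (sm_cmp U N j SN) Hq).
    + replace (1 * pdu (fun q => cmp j (X q)) q + / r * pdu (fun q => cmp j (N q)) q)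
        with (/ r * (1 * pdu (fun q => cmp j (N q)) q + r * pdu (fun q => cmp j (X q)) q))
        by (field; lra).
      rewrite Eu; ring.
  - apply is_derive_ext with (fun t => 1 * cmp j (X (fst q, t)) + / r * cmp j (N (fst q, t))).
    { intros t; symmetry; apply cmp_comb. }
    apply isd_eq with (1 * pdv (fun q => cmp j (X q)) q + / r * pdv (fun q => cmp j (N q)) q).
    + apply isd_plus; apply isd_scal.
      * exact (isd_pdv U _ q (sm_cmp U X j SX) Hq).
      * exact (isd_pdv U _ q (sm_cmp U N j SN) Hq).
    + replace (1 * pdv (fun q => cmp j (X q)) q + / r * pdv (fun q => cmp j (N q)) q)
        with (/ r * (1 * pdv (fun q => cmp j (N q)) q + r * pdv (fun q => cmp j (X q)) q))
        by (field; lra).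
      rewrite Ev; ring.
Qed.

Lemma abs_between a b t : Rmin a b <= t <= Rmax a b ->
  Rabs (t - b) <= Rabs (a - b).
Proof.
  unfold Rmin, Rmax; destruct (Rle_dec a b); intros [h1 h2];
  unfold Rabs; destruct (Rcase_abs (t - b)); destruct (Rcase_abs (a - b)); lra.
Qed.

Lemma const_1d (f : R -> R) a b :
  (forall t, Rmin a b <= t <= Rmax a b -> is_derive f t 0) -> f a = f b.
Proof.
  intros H. destruct (Rtotal_order a b) as [h|[h|h]].
  - apply eq_is_derive; [|exact h]. intros t Ht. apply H.
    rewrite Rmin_left, Rmax_right; lra.
  - subst; reflexivity.
  - symmetry. apply eq_is_derive; [|exact h]. intros t Ht. apply H.
    rewrite Rmin_right, Rmax_left; lra.
Qed.

Lemma sq_const (U : R2 -> Prop) (w : R2 -> R) p (eps : R) :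
  (forall q, Rabs (fst q - fst p) < eps -> Rabs (snd q - snd p) < eps -> U q) ->
  (forall q, U q -> is_derive (fun t => w (t, snd q)) (fst q) 0 /\
                    is_derive (fun t => w (fst q, t)) (snd q) 0) ->
  forall q, Rabs (fst q - fst p) < eps -> Rabs (snd q - snd p) < eps -> w q = w p.
Proof.
  intros Hsq Hd [q1 q2] h1 h2. destruct p as [p1 p2]. simpl in *.
  transitivity (w (q1, p2)).
  - apply (const_1d (fun t => w (q1, t)) q2 p2). intros t Ht.
    pose proof (abs_between _ _ _ Ht) as Ha.
    assert (HU : U (q1, t)) by (apply Hsq; simpl; lra).
    exact (proj2 (Hd _ HU)).
  - apply (const_1d (fun t => w (t, p2)) q1 p1). intros t Ht.
    pose proof (abs_between _ _ _ Ht) as Ha.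
    assert (HU : U (t, p2)) by (pose proof (Rabs_pos (q1 - p1)); apply Hsq; simpl; [lra | rewrite Rminus_eq_0, Rabs_R0; lra]).
    exact (proj1 (Hd _ HU)).
Qed.

Theorem theorem3p2 (M : Type) (U : nat -> R2 -> Prop) (phi : nat -> R2 -> M)
  (alpha : M -> R4) (r : R) :
  smooth_oriented_surface U phi ->
  M_connected U phi ->
  smooth_immersion U phi alpha ->
  global_orthogonal_asymptotic_lines U phi alpha ->
  0 < r ->
  constant_projection U phi alpha r ->
  gauss_curv_ne U phi alpha (r ^ 2) ->
  exists c : R4, forall x : M, norm4 (sub4 (alpha x) c) = / r.
Proof.
  intros Hsurf Hconn Himm _ Hr Hcp Hgauss.
  destruct Hsurf as [Hopen [_ [Hsurj _]]].
  destruct Hcp as [nu Hnu].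
  pose (W := fun x => comb4 1 (alpha x) (/ r) (nu x)).
  assert (Hloc : forall i p, U i p -> exists eps : posreal, forall q,
            Rabs (fst q - fst p) < eps -> Rabs (snd q - snd p) < eps ->
            U i q /\ W (phi i q) = W (phi i p)).
  { intros i p Hp.
    destruct (open_sq (U i) p (Hopen i) Hp) as [eps Heps].
    exists eps. intros q h1 h2. split; [apply Heps; assumption|].
    assert (Hd := chart_all (U i) (fun q => alpha (phi i q)) (fun q => nu (phi i q)) r
                    (Hopen i) (proj1 (Himm i)) (proj1 (Hnu i)) Hr
                    (proj2 (Hnu i)) (proj2 (Himm i))
                    (fun q n1 n2 Hq => Hgauss i q n1 n2 Hq)).
    apply R4eq_cmp. intros j.
    apply (sq_const (U i) (fun q => cmp j (W (phi i q))) p eps Heps); auto.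
    intros q0 Hq0. exact (Hd j q0 Hq0). }
  destruct (Classical_Prop.classic (exists x0 : M, True)) as [[x0 _]|Hne].
  2: { exists (mkR4 0 0 0 0). intros x. exfalso. apply Hne. exists x. exact I. }
  exists (W x0).
  assert (HS : forall x, W x = W x0).
  { destruct (Hconn (fun x => W x = W x0)) as [Hall|Hnone].
    - intros i p [Hp HW].
      destruct (Hloc i p Hp) as [eps Heps].
      exists eps. intros q [b1 b2].
      destruct (Heps q b1 b2) as [Hq HWq]. split; [exact Hq|]. rewrite HWq; exact HW.
    - intros i p [Hp HW].
      destruct (Hloc i p Hp) as [eps Heps].
      exists eps. intros q [b1 b2].
      destruct (Heps q b1 b2) as [Hq HWq]. split; [exact Hq|]. rewrite HWq; exact HW.
    - exact Hall.
    - exfalso. apply (Hnone x0). reflexivity. }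
  intros x.
  destruct (Hsurj x) as [i [p [Hp Hx]]].
  destruct (proj2 (Hnu i) p Hp) as [Hnn _].
  rewrite Hx in Hnn.
  rewrite <- (HS x).
  unfold norm4.
  replace (dot4 (sub4 (alpha x) (W x)) (sub4 (alpha x) (W x)))
    with ((/ r) ^ 2 * dot4 (nu x) (nu x)).
  - rewrite Hnn, Rmult_1_r. apply sqrt_pow2. left; apply Rinv_0_lt_compat; exact Hr.
  - unfold W, comb4, sub4, dot4; simpl. ring.
Qed.
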